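(* Let $p\ge 5$ be a prime and let $n$, $m$ and $s$ be nonnegative integers such that $n\ge m$ and $s\ge 1$. Let $r=\sum_{j=0}^{s-1}a_jp^j$ with integers $a_j$ such that $1\le a_0\le p-1$ and $0\le a_j\le p-1$ for all $j=1,\ldots,s-1$. Then \[ \binom{np^s}{mp^s+r}\equiv (m+1)\binom{n}{m+1}\binom{p^s}{r}\pmod{p^{s+1}}. \]
   Context: Binomial coefficients follow the convention $\binom{l}{t}=0$ if $l<t$ and $\binom{0}{0}=1$. *)

(* Defs.v *)
From mathcomp Require Import all_boot.

(* Main.v *)
Require Import Defs.
From mathcomp Require Import all_boot.
From mathcomp Require Import zify.

Lemma sum_ind n A x : \sum_(j < n) ((j == A :> nat) * x) = (A < n) * x.
Proof.
elim: n => [|n IH]; first by rewrite big_ord0.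
rewrite big_ord_recr /= IH ltnS.
case: (ltngtP A n) => h /=.
all: try by rewrite addn0.
all: try by rewrite mul0n.
Qed.

Lemma vsplit N P K : 0 < P ->
  'C(N + P, K) = 'C(N, K) + (P <= K) * 'C(N, K - P)
    + \sum_(j < K.+1) ((0 < K - j < P) * ('C(N, j) * 'C(P, K - j))).
Proof.
move=> P0; rewrite -Vandermonde.
rewrite (eq_bigr (fun j : 'I_K.+1 => (j == K :> nat) * 'C(N,K)
   + (P <= K) * ((j == K - P :> nat) * 'C(N, K-P))
   + (0 < K - j < P) * ('C(N, j) * 'C(P, K - j)))).
  rewrite !big_split /= -big_distrr /= !sum_ind ltnSn mul1n.
  by rewrite (_ : K - P < K.+1) ?mul1n // ltnS leq_subr.
move=> [j hj] _ /=; have hjK : j <= K by [].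
have [->|hK] := eqVneq j K.
  rewrite subnn bin0 muln1 mul1n /=.
  case: (leqP P K) => hPK /=; last by rewrite !addn0.
  by rewrite (_ : (K == K - P) = false) ?addn0 //; apply/negbTE/eqP; lia.
have [hP|hP] := eqVneq (j + P) K.
  have e1 : K - j = P by lia.
  have e2 : K - P = j by lia.
  have e3 : P <= K by lia.
  by rewrite e1 e2 e3 eqxx binn ltnn andbF /= !mul1n muln1 addn0.
rewrite (_ : (P <= K) * ((j == K - P) * 'C(N, K - P)) = 0); last first.
  case: leqP => // hPK; rewrite (_ : (j == K - P) = false) //; apply/negbTE/eqP; lia.
rewrite /= !add0n.
have hjK2 : j < K by rewrite ltn_neqAle hK hjK.
have [h|h] := ltnP (K - j) P.
  by rewrite (_ : 0 < K - j = true) ?mul1n //; lia.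
rewrite andbF mul0n (@bin_small P (K - j)) ?muln0 //.
by rewrite ltn_neqAle h andbT; apply/eqP; lia.
Qed.

Lemma dvd_jbin N j : N %| j * 'C(N, j).
Proof.
case: j => [|j]; first by rewrite mul0n dvdn0.
by rewrite -mul_bin_diag dvdn_mulr.
Qed.

Lemma lemB p s x y : prime p -> p ^ s %| x * y -> ~~ (p ^ s %| x) -> p %| y.
Proof.
move=> pp h hx; apply/negPn/negP => hy.
have c : coprime (p ^ s) y by apply: coprimeXl; rewrite prime_coprime.
by move: h; rewrite Gauss_dvdl // (negbTE hx).
Qed.

Lemma lemC p s x y : prime p -> p ^ s %| x * y -> ~~ (p %| x) -> p ^ s %| y.
Proof.
move=> pp h hx.
have c : coprime (p ^ s) x by apply: coprimeXl; rewrite prime_coprime.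
by move: h; rewrite mulnC Gauss_dvdl.
Qed.

Lemma key p s N i j : prime p -> p ^ s %| N -> ~~ (p %| i + j) ->
  ~~ (p ^ s %| i) -> ~~ (p ^ s %| j) -> p ^ s.+1 %| 'C(N, j) * 'C(p ^ s, i).
Proof.
move=> pp hN hK hi hj.
have hA : p ^ s %| j * 'C(N, j) := dvdn_trans hN (dvd_jbin N j).
have hB : p ^ s %| i * 'C(p ^ s, i) := dvd_jbin _ i.
case: (boolP (p %| j)) => pj.
  have pi : ~~ (p %| i) by apply: contra hK => pi; apply: dvdn_add.
  rewrite expnS; apply: dvdn_mul; first exact: lemB hA hj.
  exact: lemC hB pi.
rewrite expnSr; apply: dvdn_mul; first exact: lemC hA pj.
exact: lemB hB hi.
Qed.

Lemma sum_congr_mod n d (F G : 'I_n -> nat) :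
  (forall j, F j = G j %[mod d]) ->
  \sum_(j < n) F j = \sum_(j < n) G j %[mod d].
Proof.
move=> h; rewrite -modn_summ -[in RHS]modn_summ.
by congr (_ %% _); apply: eq_bigr => j _; apply: h.
Qed.

Lemma lucas p s n q : prime p ->
  'C(n * p ^ s, q * p ^ s) = 'C(n, q) %[mod p].
Proof.
move=> pp; set P := p ^ s.
have P0 : 0 < P by rewrite expn_gt0 prime_gt0.
elim: n q => [|n IH] q.
  by rewrite mul0n !bin0n muln_eq0 (negbTE (lt0n_neq0 P0)) orbF.
rewrite mulSn addnC vsplit //.
have hS : \sum_(j < (q * P).+1) ((0 < q * P - j < P) * ('C(n * P, j) * 'C(P, q * P - j))) = 0 %[mod p].
  rewrite (@sum_congr_mod _ _ _ (fun _ => 0)) ?big1 //.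
  move=> j; case: (boolP (0 < q * P - j < P)) => h; last by rewrite mul0n.
  rewrite mul1n mod0n; apply/eqP; rewrite -/(dvdn _ _); apply: dvdn_mull.
  apply: (@lemB p s (q * P - j)) => //; first exact: dvd_jbin.
  by rewrite gtnNdvd //; case/andP: h.
rewrite -modnDmr hS mod0n addn0.
clear hS; case: q => [|q].
  by rewrite mul0n leqNgt P0 mul0n addn0 bin0 bin0.
rewrite (_ : P <= q.+1 * P) ?mul1n; last by rewrite leq_pmull.
rewrite (_ : q.+1 * P - P = q * P); last by rewrite mulSn addnC addnK.
by rewrite binS -modnDm (IH q.+1) (IH q) modnDm.
Qed.

Lemma mod_mul_lift p P x y c : 0 < p -> 0 < P -> P %| c ->
  x = y %[mod p] -> x * c = y * c %[mod p * P].
Proof.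
move=> p0 P0 /dvdnP [c' ->] h.
rewrite !mulnA -!muln_modl // -modnMml h modnMml.
by [].
Qed.

Lemma modD2 d x1 x2 y1 y2 : x1 = y1 %[mod d] -> x2 = y2 %[mod d] ->
  x1 + x2 = y1 + y2 %[mod d].
Proof. by move=> h1 h2; rewrite -modnDm h1 h2 modnDm. Qed.

Lemma modD3 d x1 x2 x3 y1 y2 y3 : x1 = y1 %[mod d] -> x2 = y2 %[mod d] ->
  x3 = y3 %[mod d] -> x1 + x2 + x3 = y1 + y2 + y3 %[mod d].
Proof. by move=> h1 h2 h3; apply: modD2 => //; apply: modD2. Qed.

Lemma mainlem p s t n Q : prime p -> 0 < t < p ^ s -> ~~ (p %| t) ->
  'C(n * p ^ s, Q * p ^ s + t) = (Q + 1) * 'C(n, Q + 1) * 'C(p ^ s, t) %[mod p ^ s.+1].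
Proof.
move=> pp /andP [t0 tP] pt; set P := p ^ s.
have P0 : 0 < P by rewrite expn_gt0 prime_gt0.
have p0 := prime_gt0 pp.
have Pc : P %| 'C(P, t).
  apply: (@lemC p s t) => //; exact: dvd_jbin.
have pP : p %| P.
  move: tP; rewrite /P; case: (s) => [|s'] h; first by rewrite expn0 in h; lia.
  by rewrite expnS dvdn_mulr.
elim: n Q => [|n IH] Q.
  by rewrite mul0n !bin0n addn1 /= muln0 mul0n (_ : Q * P + t == 0 = false) //; lia.
rewrite mulSn addnC vsplit //.
set K := Q * P + t.
have hS : \sum_(j < K.+1) ((0 < K - j < P) * ('C(n * P, j) * 'C(P, K - j)))
   = 'C(n, Q) * 'C(P, t) %[mod p ^ s.+1].
  rewrite (@sum_congr_mod _ _ _ (fun j : 'I_K.+1 => (j == Q * P :> nat) * ('C(n * P, Q * P) * 'C(P, t)))) //.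
    rewrite sum_ind (_ : Q * P < K.+1) ?mul1n; last by rewrite /K; lia.
    have := @mod_mul_lift p P _ _ _ p0 P0 Pc (lucas p s n Q pp); by rewrite expnSr (mulnC (p ^ s) p).
  move=> [j hj] /=.
  have [->|hjQ] := eqVneq j (Q * P).
    rewrite mul1n (_ : K - Q * P = t); last by rewrite /K; lia.
    by rewrite t0 tP mul1n.
  rewrite mul0n.
  case: (boolP (0 < K - j < P)) => h; last by rewrite mul0n.
  rewrite mul1n mod0n; apply/eqP; rewrite -/(dvdn _ _).
  case/andP: h => h1 h2.
  apply: key => //.
  - by apply: dvdn_mull.
  - rewrite (_ : K - j + j = K); last by lia.
    rewrite /K; apply: contra pt => hd.
    by rewrite (dvdn_addr _ (dvdn_mull Q pP)) // in hd.
  - by rewrite gtnNdvd.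
  - apply/negP => /dvdnP [j' ej].
    have : j' = Q.
      rewrite ej in h1 h2; rewrite /K in h1 h2.
      have : j' < Q.+1.
        rewrite ltnNge; apply/negP => hq.
        have : Q.+1 * P <= j' * P by rewrite leq_mul2r hq orbT.
        lia.
      rewrite ltnS leq_eqVlt => /orP [/eqP //|hq].
      have : j' * P + P <= Q * P by rewrite addnC -mulSn leq_mul2r hq orbT.
      lia.
    by move=> e; move/eqP: hjQ; apply; rewrite ej e.
have h1 : 'C(n * P, K) = (Q + 1) * 'C(n, Q + 1) * 'C(P, t) %[mod p ^ s.+1] := IH Q.
have h2 : (P <= K) * 'C(n * P, K - P) = Q * 'C(n, Q) * 'C(P, t) %[mod p ^ s.+1].
  rewrite /K; case: (Q) => [|Q'].
    by rewrite mul0n add0n leqNgt tP !mul0n.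
  rewrite (_ : P <= Q'.+1 * P + t); last by rewrite mulSn; lia.
  rewrite mul1n (_ : Q'.+1 * P + t - P = Q' * P + t); last by rewrite mulSn; lia.
  by rewrite IH addn1.
rewrite (modD3 _ _ _ _ _ _ _ h1 h2 hS).
congr (_ %% _).
rewrite !addn1 binS.
set a := 'C(n, Q.+1); set b := 'C(n, Q); set c := 'C(P, t).
by rewrite mulnDr mulnDl -addnA -mulnDl -[Q * b + b]mulSnr.
Qed.

Lemma sum_lt p a k : 0 < p -> (forall j, j < k -> a j <= p - 1) ->
  \sum_(0 <= j < k) a j * p ^ j < p ^ k.
Proof.
move=> p0; elim: k => [|k IH] h; first by rewrite big_geq.
rewrite big_nat_recr //= expnS.
have h1 := IH (fun j hj => h j (ltnW hj)).
have h2 : a k * p ^ k <= (p - 1) * p ^ k by rewrite leq_mul2r h ?orbT.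
have h3 : (p - 1) * p ^ k + p ^ k = p * p ^ k.
  by rewrite -mulSnr subn1 prednK.
lia.
Qed.

Theorem corollary1p2 (p n m s : nat) (a : nat -> nat) :
  prime p -> 5 <= p -> m <= n -> 1 <= s ->
  1 <= a 0 <= p - 1 ->
  (forall j, 1 <= j <= s - 1 -> a j <= p - 1) ->
  let r := \sum_(0 <= j < s) a j * p ^ j in
  'C(n * p ^ s, m * p ^ s + r) = (m + 1) * 'C(n, m + 1) * 'C(p ^ s, r) %[mod p ^ s.+1].
Proof.
move=> pp p5 mn s1 /andP [a0l a0u] ha r.
have p0 := prime_gt0 pp.
have hlt : r < p ^ s.
  apply: sum_lt => // j hj; case: j hj => [|j] hj //; apply: ha; lia.
have hsplit : r = a 0 + \sum_(1 <= j < s) a j * p ^ j.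
  by rewrite /r big_ltn // expn0 muln1.
have hd : p %| \sum_(1 <= j < s) a j * p ^ j.
  rewrite big_nat_cond; apply: dvdn_sum => j /andP [/andP [j1 _] _].
  by apply: dvdn_mull; case: j j1 => // j _; rewrite expnS dvdn_mulr.
apply: mainlem => //.
  by rewrite hlt andbT hsplit; lia.
rewrite hsplit dvdn_addl // gtnNdvd //; lia.
Qed.
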